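(* Let $0<p,q,r\le\infty$ with $\frac1p+\frac1q=\frac1r$, let $\alpha=(\alpha_1,\dots,\alpha_N)$ be an $N$-tuple of pairwise distinct vectors in $\mathbb{R}^n$, and let $\rho>0$. For vector-valued functions $f=(f_1,\dots,f_N)$, $g=(g_1,\dots,g_N)$ on $\mathbb{R}^n$ define $$S_{\alpha,\rho}(f,g)(x)=\big(f_1(x+\rho\alpha_1)g_1(x-\alpha_1),\ \dots,\ f_N(x+\rho\alpha_N)g_N(x-\alpha_N)\big).$$ Then the norm of $S_{\alpha,\rho}$ as a bilinear operator from $L^p(\ell^2)\times L^q(\ell^2)$ to $L^r(\ell^2)$ satisfies $$\|S_{\alpha,\rho}\|_{L^p(\ell^2)\times L^q(\ell^2)\to L^r(\ell^2)}\ \ge\ \max\{N^{1/p-1/2},\,N^{1/q-1/2}\}.$$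
   Context: For $h=(h_1,\dots,h_N)$, $\|h\|_{L^s(\ell^2)}=\big\|\big(\sum_{k=1}^N|h_k|^2\big)^{1/2}\big\|_{L^s(\mathbb{R}^n)}$. The operator norm is the supremum of $\|S_{\alpha,\rho}(f,g)\|_{L^r(\ell^2)}$ over $f,g$ with $\|f\|_{L^p(\ell^2)}=\|g\|_{L^q(\ell^2)}=1$ (possibly $+\infty$). *)

(* Defs.v *)
From HB Require Import structures.
From mathcomp Require Import all_boot all_order all_algebra.
From mathcomp Require Import all_classical all_reals all_analysis.

Set Implicit Arguments.
Unset Strict Implicit.
Unset Printing Implicit Defensive.
Import Order.TTheory GRing.Theory Num.Theory.
Import numFieldNormedType.Exports.
Local Open Scope classical_set_scope.
Local Open Scope ring_scope.

(* Lebesgue measure on R^n, built as the iterated product measure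
   (((pt x R) x R) x ... x R), with pt = unit carrying the Dirac mass. *)
Fixpoint Rpow (R : realType) (n : nat) : {d : measure_display & measurableType d} :=
  match n with
  | 0 => existT _ _ (unit : measurableType _)
  | m.+1 => existT _ _ ((projT2 (Rpow R m) * (measurableTypeR R : measurableType _))%type : measurableType _)
  end.

Definition Rpow_t (R : realType) (n : nat) : measurableType (projT1 (Rpow R n)) :=
  projT2 (Rpow R n).

Fixpoint lebRn (R : realType) (n : nat) :
    {measure set (Rpow_t R n) -> \bar R} :=
  match n return {measure set (Rpow_t R n) -> \bar R} with
  | 0 => (\d_tt : {measure set unit -> \bar R})
  | m.+1 => ((lebRn R m \x (@lebesgue_measure R))%E
             : {measure set (Rpow_t R m * measurableTypeR R)%type -> \bar R})
  end.

(* Coordinates: a point of Rpow_t R m.+1 = Rpow_t R m * R is (y, t) where t is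
   the coordinate of index m. *)
Fixpoint rcoord (R : realType) (n : nat) : Rpow_t R n -> nat -> R :=
  match n return Rpow_t R n -> nat -> R with
  | 0 => fun _ _ => 0
  | m.+1 => fun y i => if i == m then y.2 else rcoord y.1 i
  end.

Definition to_row (R : realType) (n : nat) (y : Rpow_t R n) : 'rV[R]_n :=
  \row_(i < n) rcoord y i.

Definition meas_Rn (R : realType) (n : nat) (h : 'rV[R]_n -> R) : Prop :=
  measurable_fun [set: Rpow_t R n] (fun y => h (to_row y)).

Definition LsNorm (R : realType) (n : nat) (s : \bar R) (h : 'rV[R]_n -> R) : \bar R :=
  Lnorm (lebRn R n) s (fun y => (h (to_row y))%:E).

Definition l2fun (R : realType) (n N : nat) (h : 'I_N -> 'rV[R]_n -> R)
  : 'rV[R]_n -> R := fun x => Num.sqrt (\sum_(k < N) h k x ^+ 2).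

Definition LsL2Norm (R : realType) (n N : nat) (s : \bar R)
  (h : 'I_N -> 'rV[R]_n -> R) : \bar R := LsNorm s (l2fun h).

Definition S_op (R : realType) (n N : nat) (alpha : 'I_N -> 'rV[R]_n) (rho : R)
  (f g : 'I_N -> 'rV[R]_n -> R) : 'I_N -> 'rV[R]_n -> R :=
  fun k x => f k (x + rho *: alpha k) * g k (x - alpha k).

Definition S_opnorm (R : realType) (n N : nat) (alpha : 'I_N -> 'rV[R]_n) (rho : R)
  (p q r : \bar R) : \bar R :=
  ereal_sup [set e | exists f g : 'I_N -> 'rV[R]_n -> R,
    [/\ (forall k, meas_Rn (f k)), (forall k, meas_Rn (g k)),
        LsL2Norm p f = 1%E, LsL2Norm q g = 1%E &
        e = LsL2Norm r (S_op alpha rho f g)]].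

(* Main.v *)
Require Import Defs.
From HB Require Import structures.
From mathcomp Require Import all_boot all_order all_algebra.
From mathcomp Require Import all_classical all_reals all_analysis.
From mathcomp Require Import lra ring.
Import Order.TTheory GRing.Theory Num.Theory.
Local Open Scope classical_set_scope.
Local Open Scope ring_scope.
Set Implicit Arguments. Unset Strict Implicit. Unset Printing Implicit Defensive.

Definition boxp (R : realType) (n : nat) (a : nat -> R) (e : R) : set (Rpow_t R n) :=
  [set y | forall i, (i < n)%N -> a i <= rcoord y i < a i + e].
Arguments boxp {R} n a e.

Definition inbox (R : realType) (n : nat) (a : 'rV[R]_n) (e : R) (x : 'rV[R]_n) : bool :=
  [forall i, (a 0 i <= x 0 i) && (x 0 i < a 0 i + e)].

Definition rowfun (R : realType) (n : nat) (a : 'rV[R]_n) (i : nat) : R :=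
  oapp (fun j : 'I_n => a 0 j) 0 (insub i).

Lemma inbox_pre (R : realType) (n : nat) (a : 'rV[R]_n) (e : R) :
  [set y : Rpow_t R n | inbox a e (to_row y)] = boxp n (rowfun a) e.
Proof.
apply/seteqP; split => y /=.
  move=> /forallP H i ilt.
  have := H (Ordinal ilt); rewrite /to_row !mxE /rowfun.
  by rewrite -[X in insub X]/(val (Ordinal ilt)) valK.
move=> H; apply/forallP => j; have := H j (ltn_ord j).
by rewrite /to_row !mxE /rowfun valK.
Qed.

Lemma in_bigsetU (T : Type) (N : nat) (F : 'I_N -> set T) y :
  (\big[setU/set0]_(k < N) F k) y <-> exists k, F k y.
Proof.
split.
  elim/big_ind: _ => //.
  - by move=> S1 S2 H1 H2 [/H1|/H2].
  - by move=> k _ Fk; exists k.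
by case=> k Fk; rewrite (bigD1 k) //=; left.
Qed.

Lemma boxp_meas (R : realType) (e : R) (a : nat -> R) n : 0 < e ->
  measurable (boxp n a e) /\ lebRn R n (boxp n a e) = (e ^+ n)%:E.
Proof.
move=> e0; elim: n => [|m [IHm IHv]].
  have -> : boxp 0 a e = setT by apply/seteqP; split => // y _ i.
  split; first exact: measurableT.
  by rewrite /= diracE in_setT.
have -> : boxp m.+1 a e = (boxp m a e `*` `[a m, a m + e[%classic : set (Rpow_t R m * R)%type).
  apply/seteqP; split => -[y t] /= H.
    split.
      move=> i im; have := H i (ltnW im) => /=.
      by rewrite (ltn_eqF im).
    have := H m (ltnSn m) => /=; rewrite eqxx.
    by rewrite in_itv.
  case: H => H1; rewrite in_itv /= => H2 i; rewrite ltnS leq_eqVlt.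
  case/orP => [/eqP ->|im]; first by rewrite /= eqxx.
  rewrite /=.
  by rewrite (ltn_eqF im); apply: H1.
split; first exact: measurableX.
rewrite /= product_measure1E // IHv.
rewrite [X in (_ * X)%E](_ : _ = e%:E); last first.
  apply: etrans (lebesgue_measure_itv (Interval (BLeft (a m)) (BLeft (a m + e)))) _.
  by rewrite /= lte_fin ltrDl e0 -EFinD addrAC subrr add0r.
by rewrite exprS mulrC EFinM.
Qed.


Lemma abs_pow_ind (T : Type) (R : realType) (A : set T) (x : T) (c t : R) :
  0 <= c -> t != 0 -> `|c * \1_A x| `^ t = (c `^ t) * \1_A x.
Proof.
move=> c0 t0; rewrite indicE; case: (x \in A) => /=.
  by rewrite !mulr1 ger0_norm.
by rewrite !mulr0 normr0 powR0.
Qed.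

Lemma Lnorm_indic d (T : measurableType d) (R : realType)
  (mu : {measure set T -> \bar R}) (A : set T) (c m : R) (s : \bar R) :
  measurable A -> mu A = m%:E -> 0 < m -> 0 <= c -> (0 < s)%E ->
  Lnorm mu s (fun y => (c * \1_A y)%:E) = (c * m `^ fine s^-1)%:E.
Proof.
move=> mA muA m0 c0; case: s => [t||] //=; rewrite ?lte_fin => t0.
  rewrite unlock /=.
  under eq_integral => x _ do rewrite (abs_pow_ind A x c0 (lt0r_neq0 t0)).
  rewrite (integralZl_indic measurableT (fun _ => A)) //; last first.
    by rewrite ltNge powR_ge0.
  rewrite integral_indic // setIT muA -EFinM poweR_EFin fine_invr.
  rewrite powRM ?powR_ge0 ?(ltW m0) // -powRrM mulfV ?gt_eqF // powRr1 //.
have muT : (0 < mu [set: T])%E.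
  apply: (lt_le_trans (y := mu A)); first by rewrite muA lte_fin.
  by apply: le_measure => //; rewrite inE.
rewrite unlock /= muT.
rewrite powRr0 mulr1.
apply/eqP; rewrite eq_le; apply/andP; split.
  apply/ess_sup_inf.ess_supP; apply: nearW => x /=.
  by rewrite indicE; case: (x \in A); rewrite /= ?mulr1 ?mulr0 lee_fin ?normr0 // ger0_norm.
rewrite leNgt; apply/negP => H.
have [N [mN muN0 sN]] := ess_sup_inf.ess_sup_ge mu (abse \o (fun y => (c * \1_A y)%:E)).
have : (mu A <= mu N)%E.
  apply: le_measure; rewrite ?inE //.
  move=> x Ax; apply: sN => /=; apply/negP; rewrite -ltNge.
  by rewrite indicE mem_set // mulr1 ger0_norm.
by rewrite muN0 muA lee_fin leNgt m0.
Qed.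


Lemma box_measure (R : realType) n (a : 'rV[R]_n) (e : R) : 0 < e ->
  measurable [set y : Rpow_t R n | inbox a e (to_row y)] /\
  lebRn R n [set y : Rpow_t R n | inbox a e (to_row y)] = (e ^+ n)%:E.
Proof. by move=> e0; rewrite inbox_pre; apply: boxp_meas. Qed.

Lemma union_measure (R : realType) n N (a : 'I_N -> 'rV[R]_n) (e : R) : 0 < e ->
  (forall k l x, inbox (a k) e x -> inbox (a l) e x -> k = l) ->
  measurable [set y : Rpow_t R n | [exists k, inbox (a k) e (to_row y)]] /\
  lebRn R n [set y : Rpow_t R n | [exists k, inbox (a k) e (to_row y)]]
    = (N%:R * e ^+ n)%:E.
Proof.
move=> e0 disj.
have -> : [set y : Rpow_t R n | [exists k, inbox (a k) e (to_row y)]] =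
  \big[setU/set0]_(k < N) [set y : Rpow_t R n | inbox (a k) e (to_row y)].
  apply/seteqP; split => y /=.
    by move=> /existsP [k Hk]; apply/in_bigsetU; exists k.
  by move=> /in_bigsetU [k Hk]; apply/existsP; exists k.
split.
  by apply: bigsetU_measurable => k _; case: (box_measure (a k) e0).
rewrite measure_bigsetU_ord_cond.
- rewrite (eq_bigr (fun=> (e ^+ n)%:E)); last first.
    by move=> k _; exact: (proj2 (box_measure (a k) e0)).
  by rewrite sumEFin sumr_const card_ord mulr_natl.
- by move=> k _; case: (box_measure (a k) e0).
- by move=> k l _ _ [x [/= Hk Hl]]; apply: (disj k l (to_row x)).
Qed.

Lemma sep_disj (R : realType) n (a b x : 'rV[R]_n) (e : R) (i : 'I_n) :
  e <= `|a 0 i - b 0 i| -> inbox a e x -> inbox b e x -> False.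
Proof.
move=> H /forallP /(_ i) /andP [h1 h2] /forallP /(_ i) /andP [h3 h4].
move: H; rewrite ler_normr => /orP [] H; lra.
Qed.

Lemma finite_threshold (R : realType) (X : finType) (Q : X -> R -> Prop) :
  (forall x e e', 0 < e' <= e -> Q x e -> Q x e') ->
  (forall x, exists2 e, 0 < e & Q x e) ->
  exists2 e, 0 < e & forall x, Q x e.
Proof.
move=> mono ex.
suff [e e0 He] : exists2 e, 0 < e & forall x, x \in enum X -> Q x e.
  by exists e => // x; apply: He; rewrite mem_enum.
elim: (enum X) => [|x s [e2 e20 IH]]; first by exists 1.
have [e1 e10 H1] := ex x.
exists (Num.min e1 e2); first by rewrite lt_min e10 e20.
move=> y; rewrite in_cons => /orP [/eqP ->|ys].
  by apply: (mono _ e1) => //; rewrite lt_min e10 e20 ge_min lexx.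
apply: (mono _ e2); last exact: IH.
by rewrite lt_min e10 e20 ge_min lexx orbT.
Qed.

Lemma sep_exists (R : realType) n N (alpha : 'I_N -> 'rV[R]_n) :
  injective alpha -> exists2 e, 0 < e &
    forall k l, k != l -> exists i, e <= `|alpha k 0 i - alpha l 0 i|.
Proof.
move=> inj.
have [e e0 H] : exists2 e, 0 < e & forall kl : ('I_N * 'I_N)%type,
  kl.1 != kl.2 -> exists i, e <= `|alpha kl.1 0 i - alpha kl.2 0 i|.
  apply: (@finite_threshold R ('I_N * 'I_N)%type
    (fun kl e => kl.1 != kl.2 -> exists i, e <= `|alpha kl.1 0 i - alpha kl.2 0 i|)).
- move=> x e e' /andP [_ ee] H kl; have [i Hi] := H kl.
  by exists i; apply: le_trans Hi.
- move=> [k l] /=; have [->|kl] := eqVneq k l; first by exists 1.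
  have : exists i, alpha k 0 i != alpha l 0 i.
    apply/existsP; apply: contraNT kl => /existsPn H.
    by apply/eqP/inj/rowP => i; apply/eqP; move: (H i); rewrite negbK.
  case=> i Hi; exists `|alpha k 0 i - alpha l 0 i|.
    by rewrite normr_gt0 subr_eq0.
  by move=> _; exists i.
by exists e => // k l kl; apply: (H (k, l)).
Qed.

Lemma l2_disj (R : realType) n N (h : 'I_N -> 'rV[R]_n -> R) (c : R)
  (P : 'I_N -> 'rV[R]_n -> bool) : 0 <= c ->
  (forall k l x, P k x -> P l x -> k = l) ->
  (forall k x, h k x = c * (P k x)%:R) ->
  forall x, l2fun h x = c * ([exists k, P k x])%:R.
Proof.
move=> c0 disj hE x; rewrite /l2fun.
case: (boolP [exists k, P k x]) => [/existsP [j Pj]|/existsPn H].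
  rewrite (bigD1 j) //= big1 => [|k kj].
    by rewrite addr0 hE Pj mulr1 sqrtr_sqr ger0_norm.
  rewrite hE; case: (boolP (P k x)) => Pk; last by rewrite mulr0 expr0n.
  by move: kj; rewrite (disj k j x Pk Pj) eqxx.
rewrite big1 ?sqrtr0 ?mulr0 // => k _.
by rewrite hE (negbTE (H k)) mulr0 expr0n.
Qed.

Lemma l2_same (R : realType) n N (h : 'I_N -> 'rV[R]_n -> R) (c : R)
  (Q : 'rV[R]_n -> bool) : 0 <= c ->
  (forall k x, h k x = c * (Q x)%:R) ->
  forall x, l2fun h x = (c * Num.sqrt N%:R) * (Q x)%:R.
Proof.
move=> c0 hE x; rewrite /l2fun.
under eq_bigr => k _ do rewrite hE.
rewrite sumr_const card_ord -[_ *+ N]mulr_natl sqrtrM ?ler0n // sqrtr_sqr.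
by case: (Q x); rewrite ?mulr1 ?mulr0 ?normr0 ?mulr0 // ger0_norm // mulrC.
Qed.

Lemma LsNorm_ind (R : realType) n (s : \bar R) (c m : R) (Q : 'rV[R]_n -> bool) :
  measurable [set y : Rpow_t R n | Q (to_row y)] ->
  lebRn R n [set y : Rpow_t R n | Q (to_row y)] = m%:E -> 0 < m -> 0 <= c ->
  (0 < s)%E ->
  LsNorm s (fun x => c * (Q x)%:R) = (c * m `^ fine s^-1)%:E.
Proof.
move=> mQ muQ m0 c0 s0; rewrite /LsNorm.
rewrite (eq_Lnorm _ _ (g := fun y => (c * \1_[set y : Rpow_t R n | Q (to_row y)] y)%:E)).
  exact: Lnorm_indic.
move=> y /=; rewrite indicE; case: (boolP (Q (to_row y))) => H.
  by rewrite mem_set.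
by rewrite memNset //= (negbTE H).
Qed.

Lemma meas_ind (R : realType) n (c : R) (Q : 'rV[R]_n -> bool) :
  measurable [set y : Rpow_t R n | Q (to_row y)] ->
  meas_Rn (fun x => c * (Q x)%:R).
Proof.
move=> mQ; rewrite /meas_Rn.
have -> : (fun y : Rpow_t R n => c * (Q (to_row y))%:R) =
  (fun y => c * \1_[set y : Rpow_t R n | Q (to_row y)] y).
  apply/funext => y; rewrite indicE; case: (boolP (Q (to_row y))) => H.
    by rewrite mem_set.
  by rewrite memNset //= (negbTE H).
by apply: measurable_realfun.measurable_funM => //; apply: measurable_realfun.measurable_indic.
Qed.

Lemma inbox_shift (R : realType) n (a v x : 'rV[R]_n) (e : R) :
  inbox a e (x + v) = inbox (a - v) e x.
Proof.
rewrite /inbox; apply: eq_forallb => i; rewrite !mxE.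
by apply/idP/idP => /andP [h1 h2]; apply/andP; split; lra.
Qed.

Lemma inv_fin (R : realType) (s : \bar R) : (0 < s)%E ->
  (s^-1 \is a fin_num)%E /\ 0 <= fine s^-1%E.
Proof.
case: s => [t||] //; rewrite ?lte_fin => t0.
  by rewrite inver (gt_eqF t0) /= invr_ge0 (ltW t0).

Qed.

Lemma sep_scale (R : realType) n N (alpha : 'I_N -> 'rV[R]_n) (e0 d t : R) :
  (forall k l, k != l -> exists i, e0 <= `|alpha k 0 i - alpha l 0 i|) ->
  0 <= e0 -> 0 <= d -> d <= `|t| ->
  forall k l x, inbox (t *: alpha k) (d * e0) x -> inbox (t *: alpha l) (d * e0) x -> k = l.
Proof.
move=> sep e00 d0 dt k l x Hk Hl; apply/eqP; apply/negP => /negP kl.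
have [i Hi] := sep k l kl.
apply: (sep_disj (i := i) _ Hk Hl).
rewrite !mxE -mulrBr normrM.
by apply: ler_pM.
Qed.

Lemma real_id (R : realType) (N m a b : R) : 0 < N -> 0 < m ->
  ((N * m) `^ a)^-1 * (Num.sqrt N * m `^ b)^-1 * (N * m) `^ (a + b) =
  N `^ (b - 2^-1).
Proof.
move=> N0 m0.
have Nm0 : 0 < N * m by apply: mulr_gt0.
rewrite powRD; last by rewrite (gt_eqF Nm0) implybT.
rewrite (powRM b (ltW N0) (ltW m0)) powRB; last by rewrite (gt_eqF N0) implybT.
rewrite powR12_sqrt ?(ltW N0) //.
have h1 : (N * m) `^ a != 0 by rewrite gt_eqF // powR_gt0.
have h2 : Num.sqrt N != 0 by rewrite gt_eqF // sqrtr_gt0.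
have h3 : m `^ b != 0 by rewrite gt_eqF // powR_gt0.
field; by rewrite h1 h2 h3.
Qed.

Set Strict Implicit. Set Printing Implicit Defensive. Unset Implicit Arguments.

Theorem proposition2p3 (R : realType) (n N : nat) (p q r : \bar R)
  (alpha : 'I_N -> 'rV[R]_n) (rho : R) :
  (0 < N)%N ->
  (0 < p)%E -> (0 < q)%E -> (0 < r)%E ->
  (p^-1 + q^-1 = r^-1)%E ->
  injective alpha ->
  0 < rho ->
  ((Num.max (N%:R `^ (fine p^-1 - 2^-1)) (N%:R `^ (fine q^-1 - 2^-1)))%:E
     <= S_opnorm alpha rho p q r)%E.
Proof.
move=> N0 p0 q0 r0 hpqr inj rho0.
have [pf a0] := inv_fin p0; have [qf b0] := inv_fin q0; have [rf c0] := inv_fin r0.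
have hc : fine r^-1%E = fine p^-1%E + fine q^-1%E by rewrite -hpqr fineD.
set a := fine p^-1%E in a0 hc *; set b := fine q^-1%E in b0 hc *.
have [e0 e0pos sep] := sep_exists inj.
set d := Num.min 1 rho.
have d0 : 0 < d by rewrite lt_min ltr01 rho0.
set e := d * e0.
have epos : 0 < e by apply: mulr_gt0.
set m := e ^+ n.
have m0 : 0 < m by apply: exprn_gt0.
have NR0 : 0 < (N%:R : R) by rewrite ltr0n.
have Nm0 : 0 < N%:R * m by apply: mulr_gt0.
have disj : forall t, d <= `|t| -> forall k l x,
    inbox (t *: alpha k) e x -> inbox (t *: alpha l) e x -> k = l.
  by move=> t dt; apply: (sep_scale sep (ltW e0pos) (ltW d0) dt).
have d1 : d <= `|1 + rho| by rewrite ger0_norm ?ge_min ?lerDl ?(ltW rho0) // addr_ge0 // ltW.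
have dN1 : d <= `|- (1 + rho)| by rewrite normrN.
have d2 : d <= `|1 : R| by rewrite normr1 ge_min lexx.
have d3 : d <= `|- rho| by rewrite normrN ger0_norm ?(ltW rho0) // ge_min lexx orbT.
rewrite maxEle; case: ifP => _.
-
  set cf := ((N%:R * m) `^ a)^-1.
  set cg := (Num.sqrt N%:R * m `^ b)^-1.
  have cf0 : 0 <= cf by rewrite invr_ge0 powR_ge0.
  have cg0 : 0 <= cg by rewrite invr_ge0 mulr_ge0 ?sqrtr_ge0 ?powR_ge0.
  apply: ereal_sup_ubound => /=.
  exists (fun k x => cf * (inbox ((1 + rho) *: alpha k) e x)%:R).
  exists (fun k x => cg * (inbox 0 e x)%:R).
  split.
  + by move=> k; apply: (@meas_ind _ _ _ (inbox ((1 + rho) *: alpha k) e)); case: (box_measure ((1 + rho) *: alpha k) epos).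
  + by move=> k; apply: (@meas_ind _ _ _ (inbox 0 e)); case: (box_measure (0 : 'rV[R]_n) epos).
  + rewrite /LsL2Norm (_ : l2fun _ = fun x => cf * ([exists k, inbox ((1 + rho) *: alpha k) e x])%:R); last first.
      by apply/funext => x; apply: (@l2_disj _ _ _ _ cf (fun k => inbox ((1 + rho) *: alpha k) e)) => //; apply: disj.
    have [mU muU] := union_measure epos (disj _ d1).
    rewrite (LsNorm_ind mU muU Nm0 cf0 p0) mulVf // gt_eqF // powR_gt0 //.
  + rewrite /LsL2Norm (_ : l2fun _ = fun x => (cg * Num.sqrt N%:R) * (inbox 0 e x)%:R); last first.
      by apply/funext => x; apply: (@l2_same _ _ _ _ cg (inbox 0 e)).
    have [mB muB] := box_measure (0 : 'rV[R]_n) epos.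
    rewrite (LsNorm_ind mB muB m0 _ q0) ?mulr_ge0 ?sqrtr_ge0 //.
    by rewrite -mulrA mulVf // gt_eqF // mulr_gt0 ?sqrtr_gt0 ?powR_gt0.
  + rewrite /LsL2Norm (_ : l2fun _ = fun x => (cf * cg) * ([exists k, inbox (1 *: alpha k) e x])%:R); last first.
      apply/funext => x; apply: (@l2_disj _ _ _ _ (cf * cg) (fun k => inbox (1 *: alpha k) e)); first by rewrite mulr_ge0.
        exact: disj.
      move=> k y.
      have E1 : inbox ((1 + rho) *: alpha k) e (y + rho *: alpha k) = inbox (1 *: alpha k) e y.
        by rewrite inbox_shift; congr inbox; apply/rowP => i; rewrite !mxE; ring.
      have E2 : inbox 0 e (y - alpha k) = inbox (1 *: alpha k) e y.
        by rewrite inbox_shift; congr inbox; apply/rowP => i; rewrite !mxE; ring.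
      rewrite /S_op E1 E2.
      by case: (inbox _ _ _); rewrite ?mulr1 ?mulr0 // mulrCA mulrA.
    have [mU muU] := union_measure epos (disj _ d2).
    rewrite (LsNorm_ind mU muU Nm0 _ r0) ?mulr_ge0 // hc.
    by rewrite real_id.
-
  set cf := (Num.sqrt N%:R * m `^ a)^-1.
  set cg := ((N%:R * m) `^ b)^-1.
  have cg0 : 0 <= cg by rewrite invr_ge0 powR_ge0.
  have cf0 : 0 <= cf by rewrite invr_ge0 mulr_ge0 ?sqrtr_ge0 ?powR_ge0.
  apply: ereal_sup_ubound => /=.
  exists (fun k x => cf * (inbox 0 e x)%:R).
  exists (fun k x => cg * (inbox (- (1 + rho) *: alpha k) e x)%:R).
  split.
  + by move=> k; apply: (@meas_ind _ _ _ (inbox 0 e)); case: (box_measure (0 : 'rV[R]_n) epos).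
  + by move=> k; apply: (@meas_ind _ _ _ (inbox (- (1 + rho) *: alpha k) e)); case: (box_measure (- (1 + rho) *: alpha k) epos).
  + rewrite /LsL2Norm (_ : l2fun _ = fun x => (cf * Num.sqrt N%:R) * (inbox 0 e x)%:R); last first.
      by apply/funext => x; apply: (@l2_same _ _ _ _ cf (inbox 0 e)).
    have [mB muB] := box_measure (0 : 'rV[R]_n) epos.
    rewrite (LsNorm_ind mB muB m0 _ p0) ?mulr_ge0 ?sqrtr_ge0 //.
    by rewrite -mulrA mulVf // gt_eqF // mulr_gt0 ?sqrtr_gt0 ?powR_gt0.
  + rewrite /LsL2Norm (_ : l2fun _ = fun x => cg * ([exists k, inbox (- (1 + rho) *: alpha k) e x])%:R); last first.
      by apply/funext => x; apply: (@l2_disj _ _ _ _ cg (fun k => inbox (- (1 + rho) *: alpha k) e)) => //; apply: disj.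
    have [mU muU] := union_measure epos (disj _ dN1).
    rewrite (LsNorm_ind mU muU Nm0 cg0 q0) mulVf // gt_eqF // powR_gt0 //.
  + rewrite /LsL2Norm (_ : l2fun _ = fun x => (cf * cg) * ([exists k, inbox (- rho *: alpha k) e x])%:R); last first.
      apply/funext => x; apply: (@l2_disj _ _ _ _ (cf * cg) (fun k => inbox (- rho *: alpha k) e)); first by rewrite mulr_ge0.
        exact: disj.
      move=> k y.
      have E1 : inbox 0 e (y + rho *: alpha k) = inbox (- rho *: alpha k) e y.
        by rewrite inbox_shift; congr inbox; apply/rowP => i; rewrite !mxE; ring.
      have E2 : inbox (- (1 + rho) *: alpha k) e (y - alpha k) = inbox (- rho *: alpha k) e y.
        by rewrite inbox_shift; congr inbox; apply/rowP => i; rewrite !mxE; ring.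
      rewrite /S_op E1 E2.
      by case: (inbox _ _ _); rewrite ?mulr1 ?mulr0 // mulrCA mulrA.
    have [mU muU] := union_measure epos (disj _ d3).
    rewrite (LsNorm_ind mU muU Nm0 _ r0) ?mulr_ge0 // hc [a + b]addrC.
    by rewrite [cf * cg]mulrC real_id.
Qed.
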